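(* Let $\sigma,\nu\in\mathbb R$ and $V:\mathbb R\to\mathbb R$ smooth. Let $M,K$ be the $6\times6$ matrices $$M=\begin{pmatrix}0&\frac\sigma2&-\frac12&0&0&0\\-\frac\sigma2&0&0&0&0&0\\\frac12&0&0&0&0&0\\0&0&0&0&0&0\\0&0&0&0&0&0\\0&0&0&0&0&0\end{pmatrix},\quad K=\begin{pmatrix}0&0&0&0&\frac\sigma2&\nu\\0&0&0&0&0&0\\0&0&0&-1&0&0\\0&0&1&0&0&0\\-\frac\sigma2&0&0&0&0&0\\-\nu&0&0&0&0&0\end{pmatrix},$$ and $S(\mathbf z)=uw-V(u)-\frac\nu2v^2-\frac\sigma2\theta\rho$ for $\mathbf z=(u,\theta,\phi,w,\rho,v)^T$. Let $\mathbf z_h=(u_h,\theta_h,\phi_h,w_h,\rho_h,v_h)^T$ be continuously differentiable in $t$ with values in $(V_h)^6$ and satisfy the DG scheme with central fluxes: for every $j$ and every $\boldsymbol\varphi\in(V_h)^6$, $$\int_{I_j}M\partial_t\mathbf z_h\cdot\boldsymbol\varphi\,dx-\int_{I_j}K\mathbf z_h\cdot\partial_x\boldsymbol\varphi\,dx+\big(K\{\mathbf z_h\}\cdot\boldsymbol\varphi^-\big)_{j+\frac12}-\big(K\{\mathbf z_h\}\cdot\boldsymbol\varphi^+\big)_{j-\frac12}=\int_{I_j}\nabla_{\mathbf z}S(\mathbf z_h)\cdot\boldsymbol\varphi\,dx.$$ Then the discrete energy $\mathcal E_h=\int_\Omega\big(-V(u_h)+\frac\nu2v_h^2\big)dx$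 is constant in time.
   Context: This is a DG discretization of the BBM–KdV equation $u_t-\sigma u_{xxt}=V'(u)_x+\nu u_{xxx}$ in the multi-symplectic form $M\mathbf z_t+K\mathbf z_x=\nabla_{\mathbf z}S(\mathbf z)$ above. Mesh and spaces: a one-dimensional domain $\Omega$ is partitioned into cells $I_j=[x_{j-1/2},x_{j+1/2}]$, $j=1,\dots,N$, with periodic boundary conditions (interface indices modulo $N$). For fixed $k\ge0$, $V_h=\{v\in L^2(\Omega): v|_{I_j}\text{ is a polynomial of degree}\le k\ \forall j\}$. For vector functions in $(V_h)^6$, superscripts $\pm$ at $x_{j+1/2}$ denote right/left limits and $\{\mathbf v\}=\frac12(\mathbf v^++\mathbf v^-)$; subscript $j\pm\frac12$ denotes evaluation at $x_{j\pm1/2}$. *)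

(* Defs.v *)
From Stdlib Require Import Reals Lra Arith.
From Coquelicot Require Import Coquelicot.
Open Scope R_scope.

(* Vectors in R^6 are functions nat -> R, components 0..5 =
   (u, theta, phi, w, rho, v). *)
Definition vec := nat -> R.

Definition sum6 (f : nat -> R) : R :=
  f 0%nat + f 1%nat + f 2%nat + f 3%nat + f 4%nat + f 5%nat.

Definition dot6 (a b : vec) : R := sum6 (fun i => a i * b i).

Definition matvec (A : nat -> nat -> R) (z : vec) : vec :=
  fun i => sum6 (fun l => A i l * z l).

Definition Mmat (sigma : R) : nat -> nat -> R := fun i l =>
  match i, l with
  | O, 1%nat => sigma / 2
  | O, 2%nat => - (1 / 2)
  | 1%nat, O => - (sigma / 2)
  | 2%nat, O => 1 / 2
  | _, _ => 0
  end.

Definition Kmat (sigma nu : R) : nat -> nat -> R := fun i l =>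
  match i, l with
  | O, 4%nat => sigma / 2
  | O, 5%nat => nu
  | 2%nat, 3%nat => -1
  | 3%nat, 2%nat => 1
  | 4%nat, O => - (sigma / 2)
  | 5%nat, O => - nu
  | _, _ => 0
  end.

Definition S_fun (V : R -> R) (sigma nu : R) (z : vec) : R :=
  z 0%nat * z 3%nat - V (z 0%nat) - nu / 2 * (z 5%nat) ^ 2
  - sigma / 2 * z 1%nat * z 4%nat.

Definition upd (z : vec) (i : nat) (s : R) : vec :=
  fun l => if Nat.eqb l i then s else z l.

Definition gradS (V : R -> R) (sigma nu : R) (z : vec) : vec :=
  fun i => Derive (fun s => S_fun V sigma nu (upd z i s)) (z i).

(* Piecewise polynomials: coefficient families
   c : component -> cell -> power -> R ; on cell j, component i is the
   polynomial x |-> sum_{m=0}^k c i j m * x^m. *)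
Definition coefs := nat -> nat -> nat -> R.

Definition peval (k : nat) (a : nat -> R) (x : R) : R :=
  sum_f_R0 (fun m => a m * x ^ m) k.

Definition cellval (k : nat) (c : coefs) (j : nat) (x : R) : vec :=
  fun i => peval k (c i j) x.

Definition nextc (N j : nat) : nat := ((j + 1) mod N)%nat.
Definition prevc (N j : nat) : nat := ((j + N - 1) mod N)%nat.

(* Cell j (0-indexed, j < N) is [xs j, xs (j+1)]; interfaces are xs 0 .. xs N,
   with xs N identified with xs 0 (periodicity).
   Traces at the right endpoint of cell j: minus = from cell j, plus = from
   cell (j+1) mod N at its left endpoint. *)
Definition avg_right (k N : nat) (xs : nat -> R) (c : coefs) (j : nat) : vec :=
  fun i => (cellval k c (nextc N j) (xs (nextc N j)) i
            + cellval k c j (xs (S j)) i) / 2.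

(* Traces at the left endpoint of cell j: plus = from cell j, minus = from
   cell (j-1) mod N at its right endpoint. *)
Definition avg_left (k N : nat) (xs : nat -> R) (c : coefs) (j : nat) : vec :=
  fun i => (cellval k c j (xs j) i
            + cellval k c (prevc N j) (xs (S (prevc N j))) i) / 2.

Definition dtz (k : nat) (zc : R -> coefs) (j : nat) (t x : R) : vec :=
  fun i => Derive (fun s => peval k (zc s i j) x) t.

Definition dxphi (k : nat) (phi : coefs) (j : nat) (x : R) : vec :=
  fun i => Derive (fun y => peval k (phi i j) y) x.

Definition scheme_eq (k N : nat) (xs : nat -> R) (sigma nu : R) (V : R -> R)
    (zc : R -> coefs) (t : R) (phi : coefs) (j : nat) : Prop :=
  RInt (fun x => dot6 (matvec (Mmat sigma) (dtz k zc j t x)) (cellval k phi j x))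
       (xs j) (xs (S j))
  - RInt (fun x => dot6 (matvec (Kmat sigma nu) (cellval k (zc t) j x))
                        (dxphi k phi j x))
       (xs j) (xs (S j))
  + dot6 (matvec (Kmat sigma nu) (avg_right k N xs (zc t) j))
         (cellval k phi j (xs (S j)))
  - dot6 (matvec (Kmat sigma nu) (avg_left k N xs (zc t) j))
         (cellval k phi j (xs j))
  = RInt (fun x => dot6 (gradS V sigma nu (cellval k (zc t) j x))
                        (cellval k phi j x))
       (xs j) (xs (S j)).

Definition energy (k N : nat) (xs : nat -> R) (nu : R) (V : R -> R)
    (zc : R -> coefs) (t : R) : R :=
  sum_f_R0 (fun j =>
    RInt (fun x => - V (peval k (zc t 0%nat j) x)
                   + nu / 2 * (peval k (zc t 5%nat j) x) ^ 2)
         (xs j) (xs (S j))) (N - 1).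

(* Main.v *)
Require Import Defs.
From Stdlib Require Import Reals Lra Lia Arith.
From Coquelicot Require Import Coquelicot.
Open Scope R_scope.

Lemma D_plus f g t a b : is_derive f t a -> is_derive g t b ->
  is_derive (fun s => f s + g s) t (a + b).
Proof. intros H1 H2. exact (is_derive_plus f g t a b H1 H2). Qed.
Lemma D_minus f g t a b : is_derive f t a -> is_derive g t b ->
  is_derive (fun s => f s - g s) t (a - b).
Proof. intros H1 H2. exact (is_derive_minus f g t a b H1 H2). Qed.
Lemma D_cmul f t a c : is_derive f t a -> is_derive (fun s => c * f s) t (c * a).
Proof. intros H. exact (is_derive_scal f t c a H). Qed.
Lemma D_mulc f t a c : is_derive f t a -> is_derive (fun s => f s * c) t (a * c).
Proof. intros H. eapply is_derive_ext. intros s. apply Rmult_comm.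
  rewrite Rmult_comm. now apply D_cmul. Qed.
Lemma D_const t c : is_derive (fun _ : R => c) t 0.
Proof. apply (is_derive_const c t). Qed.

Lemma is_derive_sumf (F : R -> nat -> R) (D : nat -> R) t n :
  (forall m, (m <= n)%nat -> is_derive (fun s => F s m) t (D m)) ->
  is_derive (fun s => sum_f_R0 (fun m => F s m) n) t (sum_f_R0 D n).
Proof.
  induction n; intros H; simpl.
  - apply H; lia.
  - apply D_plus. apply IHn. intros; apply H; lia. apply H; lia.
Qed.

Lemma peval0 k x : peval k (fun _ => 0) x = 0.
Proof. unfold peval. induction k; simpl. ring. rewrite IHk. ring. Qed.

Lemma peval_ext k c d x : (forall m, (m <= k)%nat -> c m = d m) -> peval k c x = peval k d x.
Proof. intros H. unfold peval. apply sum_eq. intros; rewrite H; auto. Qed.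

Definition dpeval (k : nat) (c : nat -> R) (x : R) : R :=
  sum_f_R0 (fun m => (c m * INR m) * x ^ (pred m)) k.

Lemma is_derive_peval k c x : is_derive (fun y => peval k c y) x (dpeval k c x).
Proof.
  unfold peval, dpeval. induction k; cbn [sum_f_R0].
  - replace (c 0%nat * INR 0 * x ^ pred 0) with 0 by (simpl; ring).
    eapply is_derive_ext. intros t. simpl. rewrite Rmult_1_r. reflexivity. apply D_const.
  - apply D_plus. apply IHk.
    assert (H := is_derive_pow (fun y => y) (S k) x 1 (is_derive_id x)).
    apply (D_cmul _ _ _ (c (S k))) in H.
    eapply is_derive_ext. 2: { replace (c (S k) * INR (S k) * x ^ pred (S k)) with
       (c (S k) * (INR (S k) * 1 * x ^ pred (S k))) by ring. exact H. }
    intros; simpl; reflexivity.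
Qed.

Lemma Derive_peval k c x : Derive (fun y => peval k c y) x = dpeval k c x.
Proof. apply is_derive_unique, is_derive_peval. Qed.

Lemma exd_cont (f : R -> R) x : ex_derive f x -> continuous f x.
Proof. intros H. apply (ex_derive_continuous (K:=R_AbsRing) (V:=R_NormedModule)). exact H. Qed.

Lemma cont_sumpow (a : nat -> R) (g : nat -> nat) n x :
  continuous (fun y => sum_f_R0 (fun m => a m * y ^ (g m)) n) x.
Proof.
  induction n; simpl.
  - apply exd_cont. auto_derive. auto.
  - apply (continuous_plus (fun y => sum_f_R0 (fun m => a m * y ^ (g m)) n)
                           (fun y => a (S n) * y ^ (g (S n)))). apply IHn.
    apply exd_cont. auto_derive. auto.
Qed.

Lemma cont_peval k c x : continuous (fun y => peval k c y) x.
Proof. apply (cont_sumpow c (fun m => m)). Qed.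
Lemma cont_dpeval k c x : continuous (fun y => dpeval k c y) x.
Proof. unfold dpeval. apply (cont_sumpow (fun m => c m * INR m) pred). Qed.
Lemma cont_Dpeval k c x : continuous (fun y => Derive (fun z => peval k c z) y) x.
Proof. eapply continuous_ext. intros; symmetry; apply Derive_peval. apply cont_dpeval. Qed.

Lemma is_derive_peval_coef k (C : R -> nat -> R) (D : nat -> R) t x :
  (forall m, (m <= k)%nat -> is_derive (fun s => C s m) t (D m)) ->
  is_derive (fun s => peval k (C s) x) t (peval k D x).
Proof.
  intros H. unfold peval. apply (is_derive_sumf (fun s m => C s m * x ^ m)).
  intros m Hm. apply D_mulc. auto.
Qed.

Lemma c_plus (f g : R -> R) x : continuous f x -> continuous g x -> continuous (fun y => f y + g y) x.
Proof. intros; apply (continuous_plus f g); auto. Qed.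
Lemma c_minus (f g : R -> R) x : continuous f x -> continuous g x -> continuous (fun y => f y - g y) x.
Proof. intros; apply (continuous_minus f g); auto. Qed.
Lemma c_mult (f g : R -> R) x : continuous f x -> continuous g x -> continuous (fun y => f y * g y) x.
Proof. intros; apply (continuous_mult f g); auto. Qed.
Lemma c_opp (f : R -> R) x : continuous f x -> continuous (fun y => - f y) x.
Proof. intros; apply (continuous_opp f); auto. Qed.
Lemma c_const (c : R) x : continuous (fun _ : R => c) x.
Proof. apply continuous_const. Qed.
Lemma c_pow2 (f : R -> R) x : continuous f x -> continuous (fun y => f y ^ 2) x.
Proof. intros H. apply (continuous_ext (fun y => f y * f y)). intros; simpl; ring.
  apply c_mult; auto. Qed.

Ltac cont := repeat first
  [ apply c_plus | apply c_minus | apply c_mult | apply c_opp | apply c_pow2 | apply c_const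
  | apply cont_peval | apply cont_Dpeval ].

Lemma exR (f : R -> R) a b : (forall x, continuous f x) -> ex_RInt f a b.
Proof. intros H; apply (ex_RInt_continuous (V:=R_CompleteNormedModule)); auto. Qed.

Lemma RInt_extR (f g : R -> R) a b : (forall x, f x = g x) -> RInt f a b = RInt g a b.
Proof. intros H; apply RInt_ext; intros; apply H. Qed.

Lemma RInt_add (f g : R -> R) a b : ex_RInt f a b -> ex_RInt g a b ->
  RInt (fun x => f x + g x) a b = RInt f a b + RInt g a b.
Proof. intros; apply (RInt_plus f g); auto. Qed.
Lemma RInt_sub (f g : R -> R) a b : ex_RInt f a b -> ex_RInt g a b ->
  RInt (fun x => f x - g x) a b = RInt f a b - RInt g a b.
Proof. intros; apply (RInt_minus f g); auto. Qed.
Lemma RInt_cmul (f : R -> R) a b c : ex_RInt f a b ->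
  RInt (fun x => c * f x) a b = c * RInt f a b.
Proof. intros; apply (RInt_scal f a b c); auto. Qed.
Lemma RInt_zero a b : RInt (fun _ => 0) a b = 0.
Proof. rewrite RInt_const. unfold scal; simpl; unfold mult; simpl. ring. Qed.
Lemma RInt_comm (f g : R -> R) a b : RInt (fun x => f x * g x) a b = RInt (fun x => g x * f x) a b.
Proof. apply RInt_extR; intros; ring. Qed.

Lemma RInt_peval_lin k c (g : R -> R) a b : (forall x, continuous g x) ->
  RInt (fun x => peval k c x * g x) a b = sum_f_R0 (fun m => c m * RInt (fun x => x ^ m * g x) a b) k.
Proof.
  intros Hg. assert (Hp : forall m, ex_RInt (fun x => x ^ m * g x) a b).
  { intros m. apply exR; intros. apply c_mult; auto. apply exd_cont; auto_derive; auto. }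
  unfold peval. induction k; cbn [sum_f_R0].
  - rewrite <- RInt_cmul by auto. apply RInt_extR; intros; ring.
  - rewrite <- IHk. rewrite <- RInt_cmul by auto. rewrite <- RInt_add.
    apply RInt_extR; intros; ring.
    apply exR; intros. apply c_mult; auto. apply (cont_peval k c).
    apply exR; intros. apply c_mult. apply c_const. apply c_mult; auto. apply exd_cont; auto_derive; auto.
Qed.

Lemma is_derive_RInt_peval k (C : R -> nat -> R) (D : nat -> R) (g : R -> R) a b t :
  (forall x, continuous g x) ->
  (forall m, (m <= k)%nat -> is_derive (fun s => C s m) t (D m)) ->
  is_derive (fun s => RInt (fun x => peval k (C s) x * g x) a b) t
            (RInt (fun x => peval k D x * g x) a b).
Proof.
  intros Hg H. rewrite RInt_peval_lin; auto.
  eapply is_derive_ext. intros s. symmetry. apply RInt_peval_lin. auto.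
  apply (is_derive_sumf (fun s m => C s m * RInt (fun x => x ^ m * g x) a b)).
  intros; apply D_mulc; auto.
Qed.

Definition avgR (N : nat) (xs : nat -> R) (a : nat -> R -> R) (j : nat) : R :=
  (a (nextc N j) (xs (nextc N j)) + a j (xs (S j))) / 2.
Definition avgL (N : nat) (xs : nat -> R) (a : nat -> R -> R) (j : nat) : R :=
  (a j (xs j) + a (prevc N j) (xs (S (prevc N j)))) / 2.
Definition Bj (N : nat) (xs : nat -> R) (a q : nat -> R -> R) (j : nat) : R :=
  - RInt (fun x => a j x * Derive (q j) x) (xs j) (xs (S j))
  + avgR N xs a j * q j (xs (S j)) - avgL N xs a j * q j (xs j).
Definition pw (k : nat) (c : nat -> nat -> R) : nat -> R -> R := fun j x => peval k (c j) x.

Lemma next_lt N j : (0 < N)%nat -> (nextc N j < N)%nat.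
Proof. intros; unfold nextc; apply Nat.mod_upper_bound; lia. Qed.
Lemma prev_lt N j : (0 < N)%nat -> (prevc N j < N)%nat.
Proof. intros; unfold prevc; apply Nat.mod_upper_bound; lia. Qed.

Lemma prev_0 n : prevc (S n) 0 = n.
Proof. unfold prevc. replace (0 + S n - 1)%nat with n by lia. apply Nat.mod_small; lia. Qed.
Lemma prev_S n j : (S j < S n)%nat -> prevc (S n) (S j) = j.
Proof. intros. unfold prevc. replace (S j + S n - 1)%nat with (j + 1 * S n)%nat by lia.
  rewrite Nat.Div0.mod_add. apply Nat.mod_small; lia. Qed.
Lemma next_prev N j : (j < N)%nat -> nextc N (prevc N j) = j.
Proof.
  intros H. destruct N as [|n]; [lia|]. destruct j as [|j].
  - rewrite prev_0. unfold nextc. replace (n+1)%nat with (1 * S n)%nat by lia.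
    apply Nat.Div0.mod_mul.
  - rewrite prev_S by lia. unfold nextc. replace (j+1)%nat with (S j) by lia.
    apply Nat.mod_small; lia.
Qed.

Lemma sum_prev N h : (0 < N)%nat ->
  sum_f_R0 (fun j => h (prevc N j)) (N - 1) = sum_f_R0 h (N - 1).
Proof.
  intros HN. destruct N as [|n]; [lia|]. replace (S n - 1)%nat with n by lia.
  destruct n as [|n].
  - cbn [sum_f_R0]. rewrite prev_0. reflexivity.
  - rewrite decomp_sum by lia. rewrite prev_0. simpl pred.
    rewrite (sum_eq _ h n). cbn [sum_f_R0]. ring.
    intros i Hi. rewrite prev_S by lia. reflexivity.
Qed.

Lemma ftc_prod k ca cb a b :
  RInt (fun x => peval k ca x * Derive (fun y => peval k cb y) x) a b
  + RInt (fun x => peval k cb x * Derive (fun y => peval k ca y) x) a b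
  = peval k ca b * peval k cb b - peval k ca a * peval k cb a.
Proof.
  rewrite <- RInt_add.
  2,3: apply exR; intros; apply c_mult; [apply cont_peval | apply cont_Dpeval].
  transitivity (minus ((fun x => peval k ca x * peval k cb x) b) ((fun x => peval k ca x * peval k cb x) a)).
  - apply is_RInt_unique. apply (is_RInt_derive (V:=R_CompleteNormedModule) (fun x => peval k ca x * peval k cb x)).
    + intros x _. rewrite !Derive_peval.
      eapply is_derive_ext. intros; reflexivity.
      replace (peval k ca x * dpeval k cb x + peval k cb x * dpeval k ca x)
        with (plus (mult (dpeval k ca x) (peval k cb x)) (mult (peval k ca x) (dpeval k cb x))).
      apply (is_derive_mult (fun y => peval k ca y) (fun y => peval k cb y)).
      apply is_derive_peval. apply is_derive_peval. intros; apply Rmult_comm.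
      unfold plus, mult; simpl. ring.
    + intros x _. apply c_plus; apply c_mult; try apply cont_peval; apply cont_Dpeval.
  - unfold minus, plus, opp; simpl. ring.
Qed.

Lemma antisym N xs k ca cb : (0 < N)%nat ->
  sum_f_R0 (fun j => Bj N xs (pw k ca) (pw k cb) j + Bj N xs (pw k cb) (pw k ca) j) (N - 1) = 0.
Proof.
  intros HN.
  set (H := fun j => (pw k ca (nextc N j) (xs (nextc N j)) * pw k cb j (xs (S j))
                    + pw k cb (nextc N j) (xs (nextc N j)) * pw k ca j (xs (S j))) / 2).
  rewrite (sum_eq _ (fun j => H j - H (prevc N j))).
  - rewrite minus_sum. rewrite sum_prev by auto. ring.
  - intros j Hj. unfold H. rewrite next_prev by lia.
    unfold Bj, avgR, avgL.
    assert (E := ftc_prod k (ca j) (cb j) (xs j) (xs (S j))).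
    unfold pw in *. lra.
Qed.

Definition single (i : nat) (q : nat -> nat -> R) : coefs :=
  fun i' j m => if Nat.eqb i' i then q j m else 0.

Lemma Derive_peval0 k x : Derive (fun y => peval k (fun _ : nat => 0) y) x = 0.
Proof. rewrite Derive_peval. unfold dpeval. induction k; cbn [sum_f_R0]. ring. rewrite IHk; ring. Qed.

Lemma dot6_single i q k j x a : (i < 6)%nat ->
  dot6 a (cellval k (single i q) j x) = a i * peval k (q j) x.
Proof.
  intros Hi. unfold dot6, sum6, cellval, single.
  destruct i as [|[|[|[|[|[|i]]]]]]; try lia; cbn [Nat.eqb]; rewrite ?peval0; change (peval k (fun m => q j m) x) with (peval k (q j) x); ring.
Qed.

Lemma dot6_dsingle i q k j x a : (i < 6)%nat ->
  dot6 a (dxphi k (single i q) j x) = a i * Derive (fun y => peval k (q j) y) x.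
Proof.
  intros Hi. unfold dot6, sum6, dxphi, single.
  destruct i as [|[|[|[|[|[|i]]]]]]; try lia; cbn [Nat.eqb]; rewrite ?Derive_peval0; change (fun y => peval k (fun m => q j m) y) with (fun y => peval k (q j) y); ring.
Qed.

Lemma scheme_single k N xs sigma nu V zc t q j i : (i < 6)%nat ->
  scheme_eq k N xs sigma nu V zc t (single i q) j ->
  RInt (fun x => matvec (Mmat sigma) (dtz k zc j t x) i * peval k (q j) x) (xs j) (xs (S j))
  - RInt (fun x => matvec (Kmat sigma nu) (cellval k (zc t) j x) i
                   * Derive (fun y => peval k (q j) y) x) (xs j) (xs (S j))
  + matvec (Kmat sigma nu) (avg_right k N xs (zc t) j) i * peval k (q j) (xs (S j))
  - matvec (Kmat sigma nu) (avg_left k N xs (zc t) j) i * peval k (q j) (xs j)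
  = RInt (fun x => gradS V sigma nu (cellval k (zc t) j x) i * peval k (q j) x)
         (xs j) (xs (S j)).
Proof.
  intros Hi H. unfold scheme_eq in H.
  rewrite (RInt_extR (fun x => dot6 (matvec (Kmat sigma nu) (cellval k (zc t) j x)) (dxphi k (single i q) j x))
     (fun x => matvec (Kmat sigma nu) (cellval k (zc t) j x) i
                   * Derive (fun y => peval k (q j) y) x)) in H
    by (intros; apply dot6_dsingle; auto).
  rewrite (RInt_extR (fun x => dot6 (gradS V sigma nu (cellval k (zc t) j x)) (cellval k (single i q) j x))
     (fun x => gradS V sigma nu (cellval k (zc t) j x) i * peval k (q j) x)) in H
    by (intros; apply dot6_single; auto).
  rewrite (RInt_extR (fun x => dot6 (matvec (Mmat sigma) (dtz k zc j t x)) (cellval k (single i q) j x))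
     (fun x => matvec (Mmat sigma) (dtz k zc j t x) i * peval k (q j) x)) in H
    by (intros; apply dot6_single; auto).
  rewrite !dot6_single in H by auto.
  exact H.
Qed.

Ltac mv := intros; unfold matvec, sum6, Mmat, Kmat; cbn; ring.
Lemma M0 s z : matvec (Mmat s) z 0%nat = s/2 * z 1%nat - 1/2 * z 2%nat. Proof. mv. Qed.
Lemma M1 s z : matvec (Mmat s) z 1%nat = - (s/2) * z 0%nat. Proof. mv. Qed.
Lemma M2 s z : matvec (Mmat s) z 2%nat = 1/2 * z 0%nat. Proof. mv. Qed.
Lemma M3 s z : matvec (Mmat s) z 3%nat = 0. Proof. mv. Qed.
Lemma M4 s z : matvec (Mmat s) z 4%nat = 0. Proof. mv. Qed.
Lemma M5 s z : matvec (Mmat s) z 5%nat = 0. Proof. mv. Qed.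
Lemma K0 s n z : matvec (Kmat s n) z 0%nat = s/2 * z 4%nat + n * z 5%nat. Proof. mv. Qed.
Lemma K1 s n z : matvec (Kmat s n) z 1%nat = 0. Proof. mv. Qed.
Lemma K2 s n z : matvec (Kmat s n) z 2%nat = - z 3%nat. Proof. mv. Qed.
Lemma K3 s n z : matvec (Kmat s n) z 3%nat = z 2%nat. Proof. mv. Qed.
Lemma K4 s n z : matvec (Kmat s n) z 4%nat = - (s/2) * z 0%nat. Proof. mv. Qed.
Lemma K5 s n z : matvec (Kmat s n) z 5%nat = - n * z 0%nat. Proof. mv. Qed.

Ltac gs := intros; unfold gradS, S_fun, upd; cbn [Nat.eqb]; apply is_derive_unique; auto_derive; auto; ring.
Lemma G0 V s n z : ex_derive V (z 0%nat) -> gradS V s n z 0%nat = z 3%nat - Derive V (z 0%nat). Proof. intros; unfold gradS, S_fun, upd; cbn [Nat.eqb]; apply is_derive_unique; auto_derive; auto. change (fun x : R => V x) with V. ring. Qed.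
Lemma G1 V s n z : gradS V s n z 1%nat = - (s/2) * z 4%nat. Proof. gs. Qed.
Lemma G2 V s n z : gradS V s n z 2%nat = 0. Proof. gs. Qed.
Lemma G3 V s n z : gradS V s n z 3%nat = z 0%nat. Proof. gs. Qed.
Lemma G4 V s n z : gradS V s n z 4%nat = - (s/2) * z 1%nat. Proof. gs. Qed.
Lemma G5 V s n z : gradS V s n z 5%nat = - n * z 5%nat. Proof. intros; unfold gradS, S_fun, upd; cbn [Nat.eqb]; apply is_derive_unique; auto_derive; auto. field. Qed.

Definition cd (zc : R -> coefs) (t : R) (i : nat) : nat -> nat -> R :=
  fun j m => Derive (fun s => zc s i j m) t.

Lemma dtz_eq zc k j t x i : (forall m, (m <= k)%nat -> ex_derive (fun s => zc s i j m) t) ->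
  dtz k zc j t x i = pw k (cd zc t i) j x.
Proof. intros H. unfold dtz. apply is_derive_unique. apply is_derive_peval_coef.
  intros; apply Derive_correct; auto. Qed.

Lemma RInt_lin2 (f g : R -> R) a b al be : ex_RInt f a b -> ex_RInt g a b ->
  RInt (fun x => al * f x + be * g x) a b = al * RInt f a b + be * RInt g a b.
Proof. intros. rewrite RInt_add. rewrite !RInt_cmul; auto.
  apply (ex_RInt_scal f a b al); auto. apply (ex_RInt_scal g a b be); auto. Qed.

Lemma exRpp k a b j l r : ex_RInt (fun x => pw k a j x * pw k b j x) l r.
Proof. apply exR; intros. apply c_mult; apply cont_peval. Qed.
Lemma exRpd k a b j l r : ex_RInt (fun x => pw k a j x * Derive (pw k b j) x) l r.
Proof. apply exR; intros. apply c_mult. apply cont_peval. apply cont_Dpeval. Qed.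
Ltac exc := apply exRpp.
Ltac exd := apply exRpd.


Lemma clean3 (k N : nat) (xs : nat -> R) (sigma nu : R) (V : R -> R) (zc : R -> coefs) s cq j : scheme_eq k N xs sigma nu V zc s (single 3 cq) j ->
  Bj N xs (pw k (zc s 2%nat)) (pw k cq) j =
  RInt (fun x => pw k (zc s 0%nat) j x * pw k cq j x) (xs j) (xs (S j)).
Proof.
  intros H. apply scheme_single in H; [|lia].
  rewrite (RInt_extR (fun x => matvec (Mmat sigma) (dtz k zc j s x) 3%nat * peval k (cq j) x) (fun _ => 0)) in H
    by (intros; rewrite M3; ring).
  rewrite (RInt_extR (fun x => matvec (Kmat sigma nu) (cellval k (zc s) j x) 3%nat * Derive (fun y => peval k (cq j) y) x)
     (fun x => pw k (zc s 2%nat) j x * Derive (pw k cq j) x)) in H by (intros; rewrite K3; reflexivity).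
  rewrite (RInt_extR (fun x => gradS V sigma nu (cellval k (zc s) j x) 3%nat * peval k (cq j) x)
     (fun x => pw k (zc s 0%nat) j x * pw k cq j x)) in H by (intros; rewrite G3; reflexivity).
  rewrite RInt_zero, !K3 in H.
  unfold Bj, avgR, avgL. unfold avg_right, avg_left, cellval in H. cbv beta in *. unfold pw in *. cbv beta in *. lra.
Qed.

Lemma clean5 (k N : nat) (xs : nat -> R) (sigma nu : R) (V : R -> R) (zc : R -> coefs) s cq j : scheme_eq k N xs sigma nu V zc s (single 5 cq) j ->
  - nu * Bj N xs (pw k (zc s 0%nat)) (pw k cq) j =
  - nu * RInt (fun x => pw k (zc s 5%nat) j x * pw k cq j x) (xs j) (xs (S j)).
Proof.
  intros H. apply scheme_single in H; [|lia].
  rewrite (RInt_extR (fun x => matvec (Mmat sigma) (dtz k zc j s x) 5%nat * peval k (cq j) x) (fun _ => 0)) in H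
    by (intros; rewrite M5; ring).
  rewrite (RInt_extR (fun x => matvec (Kmat sigma nu) (cellval k (zc s) j x) 5%nat * Derive (fun y => peval k (cq j) y) x)
     (fun x => - nu * (pw k (zc s 0%nat) j x * Derive (pw k cq j) x))) in H by (intros; rewrite K5; unfold pw, cellval; ring).
  rewrite (RInt_extR (fun x => gradS V sigma nu (cellval k (zc s) j x) 5%nat * peval k (cq j) x)
     (fun x => - nu * (pw k (zc s 5%nat) j x * pw k cq j x))) in H by (intros; rewrite G5; unfold pw, cellval; ring).
  rewrite RInt_zero, !K5 in H.
  pose proof (RInt_cmul (fun x => pw k (zc s 0%nat) j x * Derive (pw k cq j) x) (xs j) (xs (S j)) (-nu) ltac:(exd)).
  pose proof (RInt_cmul (fun x => pw k (zc s 5%nat) j x * pw k cq j x) (xs j) (xs (S j)) (-nu) ltac:(exc)).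
  unfold Bj, avgR, avgL. unfold avg_right, avg_left, cellval in H. cbv beta in *. unfold pw in *. cbv beta in *. lra.
Qed.

Lemma clean4 (k N : nat) (xs : nat -> R) (sigma nu : R) (V : R -> R) (zc : R -> coefs) s cq j : scheme_eq k N xs sigma nu V zc s (single 4 cq) j ->
  - (sigma / 2) * Bj N xs (pw k (zc s 0%nat)) (pw k cq) j =
  - (sigma / 2) * RInt (fun x => pw k (zc s 1%nat) j x * pw k cq j x) (xs j) (xs (S j)).
Proof.
  intros H. apply scheme_single in H; [|lia].
  rewrite (RInt_extR (fun x => matvec (Mmat sigma) (dtz k zc j s x) 4%nat * peval k (cq j) x) (fun _ => 0)) in H
    by (intros; rewrite M4; ring).
  rewrite (RInt_extR (fun x => matvec (Kmat sigma nu) (cellval k (zc s) j x) 4%nat * Derive (fun y => peval k (cq j) y) x)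
     (fun x => - (sigma/2) * (pw k (zc s 0%nat) j x * Derive (pw k cq j) x))) in H by (intros; rewrite K4; unfold pw, cellval; ring).
  rewrite (RInt_extR (fun x => gradS V sigma nu (cellval k (zc s) j x) 4%nat * peval k (cq j) x)
     (fun x => - (sigma/2) * (pw k (zc s 1%nat) j x * pw k cq j x))) in H by (intros; rewrite G4; unfold pw, cellval; ring).
  rewrite RInt_zero, !K4 in H.
  pose proof (RInt_cmul (fun x => pw k (zc s 0%nat) j x * Derive (pw k cq j) x) (xs j) (xs (S j)) (-(sigma/2)) ltac:(exd)).
  pose proof (RInt_cmul (fun x => pw k (zc s 1%nat) j x * pw k cq j x) (xs j) (xs (S j)) (-(sigma/2)) ltac:(exc)).
  unfold Bj, avgR, avgL. unfold avg_right, avg_left, cellval in H. cbv beta in *. unfold pw in *. cbv beta in *. lra.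
Qed.

Lemma clean1 (k N : nat) (xs : nat -> R) (sigma nu : R) (V : R -> R) (zc : R -> coefs) t cq j : (forall m, (m <= k)%nat -> ex_derive (fun s => zc s 0%nat j m) t) ->
  scheme_eq k N xs sigma nu V zc t (single 1 cq) j ->
  - (sigma / 2) * RInt (fun x => pw k (cd zc t 0%nat) j x * pw k cq j x) (xs j) (xs (S j)) =
  - (sigma / 2) * RInt (fun x => pw k (zc t 4%nat) j x * pw k cq j x) (xs j) (xs (S j)).
Proof.
  intros Hd H. apply scheme_single in H; [|lia].
  rewrite (RInt_extR (fun x => matvec (Mmat sigma) (dtz k zc j t x) 1%nat * peval k (cq j) x)
     (fun x => - (sigma/2) * (pw k (cd zc t 0%nat) j x * pw k cq j x))) in H
    by (intros; rewrite M1, dtz_eq by auto; unfold pw; ring).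
  rewrite (RInt_extR (fun x => matvec (Kmat sigma nu) (cellval k (zc t) j x) 1%nat * Derive (fun y => peval k (cq j) y) x)
     (fun x => 0)) in H by (intros; rewrite K1; ring).
  rewrite (RInt_extR (fun x => gradS V sigma nu (cellval k (zc t) j x) 1%nat * peval k (cq j) x)
     (fun x => - (sigma/2) * (pw k (zc t 4%nat) j x * pw k cq j x))) in H by (intros; rewrite G1; unfold pw, cellval; ring).
  rewrite RInt_zero, !K1 in H.
  pose proof (RInt_cmul (fun x => pw k (cd zc t 0%nat) j x * pw k cq j x) (xs j) (xs (S j)) (-(sigma/2)) ltac:(exc)).
  pose proof (RInt_cmul (fun x => pw k (zc t 4%nat) j x * pw k cq j x) (xs j) (xs (S j)) (-(sigma/2)) ltac:(exc)).
  cbv beta in *. lra.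
Qed.

Lemma clean2 (k N : nat) (xs : nat -> R) (sigma nu : R) (V : R -> R) (zc : R -> coefs) t cq j : (forall m, (m <= k)%nat -> ex_derive (fun s => zc s 0%nat j m) t) ->
  scheme_eq k N xs sigma nu V zc t (single 2 cq) j ->
  1/2 * RInt (fun x => pw k (cd zc t 0%nat) j x * pw k cq j x) (xs j) (xs (S j))
  - Bj N xs (pw k (zc t 3%nat)) (pw k cq) j = 0.
Proof.
  intros Hd H. apply scheme_single in H; [|lia].
  rewrite (RInt_extR (fun x => matvec (Mmat sigma) (dtz k zc j t x) 2%nat * peval k (cq j) x)
     (fun x => 1/2 * (pw k (cd zc t 0%nat) j x * pw k cq j x))) in H
    by (intros; rewrite M2, dtz_eq by auto; unfold pw; ring).
  rewrite (RInt_extR (fun x => matvec (Kmat sigma nu) (cellval k (zc t) j x) 2%nat * Derive (fun y => peval k (cq j) y) x)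
     (fun x => -1 * (pw k (zc t 3%nat) j x * Derive (pw k cq j) x))) in H by (intros; rewrite K2; unfold pw, cellval; ring).
  rewrite (RInt_extR (fun x => gradS V sigma nu (cellval k (zc t) j x) 2%nat * peval k (cq j) x)
     (fun x => 0)) in H by (intros; rewrite G2; ring).
  rewrite RInt_zero, !K2 in H.
  pose proof (RInt_cmul (fun x => pw k (cd zc t 0%nat) j x * pw k cq j x) (xs j) (xs (S j)) (1/2) ltac:(exc)).
  pose proof (RInt_cmul (fun x => pw k (zc t 3%nat) j x * Derive (pw k cq j) x) (xs j) (xs (S j)) (-1) ltac:(exd)).
  unfold Bj, avgR, avgL. unfold avg_right, avg_left, cellval in H. cbv beta in *. unfold pw in *. cbv beta in *. lra.
Qed.

Lemma clean0 (k N : nat) (xs : nat -> R) (sigma nu : R) (V : R -> R) (zc : R -> coefs) t cq j : (forall y, ex_derive V y) -> (forall y, continuous (Derive V) y) ->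
  (forall i m, (i < 6)%nat -> (m <= k)%nat -> ex_derive (fun s => zc s i j m) t) ->
  scheme_eq k N xs sigma nu V zc t (single 0 cq) j ->
  sigma / 2 * RInt (fun x => pw k (cd zc t 1%nat) j x * pw k cq j x) (xs j) (xs (S j))
  - 1 / 2 * RInt (fun x => pw k (cd zc t 2%nat) j x * pw k cq j x) (xs j) (xs (S j))
  + sigma / 2 * Bj N xs (pw k (zc t 4%nat)) (pw k cq) j
  + nu * Bj N xs (pw k (zc t 5%nat)) (pw k cq) j
  = RInt (fun x => pw k (zc t 3%nat) j x * pw k cq j x) (xs j) (xs (S j))
  - RInt (fun x => Derive V (pw k (zc t 0%nat) j x) * pw k cq j x) (xs j) (xs (S j)).
Proof.
  intros HV HV' Hd H. apply scheme_single in H; [|lia].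
  rewrite (RInt_extR (fun x => matvec (Mmat sigma) (dtz k zc j t x) 0%nat * peval k (cq j) x)
     (fun x => sigma/2 * (pw k (cd zc t 1%nat) j x * pw k cq j x)
             + (-1/2) * (pw k (cd zc t 2%nat) j x * pw k cq j x))) in H
    by (intros; rewrite M0, !dtz_eq by (intros; apply Hd; lia); unfold pw; field).
  rewrite (RInt_extR (fun x => matvec (Kmat sigma nu) (cellval k (zc t) j x) 0%nat * Derive (fun y => peval k (cq j) y) x)
     (fun x => sigma/2 * (pw k (zc t 4%nat) j x * Derive (pw k cq j) x)
             + nu * (pw k (zc t 5%nat) j x * Derive (pw k cq j) x))) in H
    by (intros; rewrite K0; unfold pw, cellval; ring).
  rewrite (RInt_extR (fun x => gradS V sigma nu (cellval k (zc t) j x) 0%nat * peval k (cq j) x)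
     (fun x => pw k (zc t 3%nat) j x * pw k cq j x - Derive V (pw k (zc t 0%nat) j x) * pw k cq j x)) in H
    by (intros; rewrite G0 by auto; unfold pw, cellval; ring).
  rewrite !K0 in H.
  pose proof (RInt_lin2 (fun x => pw k (cd zc t 1%nat) j x * pw k cq j x) (fun x => pw k (cd zc t 2%nat) j x * pw k cq j x) (xs j) (xs (S j)) (sigma/2) (-1/2) ltac:(exc) ltac:(exc)).
  pose proof (RInt_lin2 (fun x => pw k (zc t 4%nat) j x * Derive (pw k cq j) x) (fun x => pw k (zc t 5%nat) j x * Derive (pw k cq j) x) (xs j) (xs (S j)) (sigma/2) nu ltac:(exd) ltac:(exd)).
  assert (XV : ex_RInt (fun x => Derive V (pw k (zc t 0%nat) j x) * pw k cq j x) (xs j) (xs (S j))).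
  { apply exR; intros. apply c_mult. apply (continuous_comp (fun y => pw k (zc t 0%nat) j y) (Derive V)).
       apply cont_peval. apply HV'. apply cont_peval. }
  pose proof (RInt_sub (fun x => pw k (zc t 3%nat) j x * pw k cq j x) (fun x => Derive V (pw k (zc t 0%nat) j x) * pw k cq j x) (xs j) (xs (S j)) ltac:(exc) XV).
  unfold Bj, avgR, avgL. unfold avg_right, avg_left, cellval in H. cbv beta in *. unfold pw in *. cbv beta in *. lra.
Qed.


Lemma deriv_zero T0 T1 (F : R -> R) t l : (forall s, T0 < s < T1 -> F s = 0) -> T0 < t < T1 ->
  is_derive F t l -> l = 0.
Proof.
  intros HF Ht HD. apply is_derive_unique in HD. rewrite <- HD.
  rewrite (Derive_ext_loc F (fun _ => 0)). apply Derive_const.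
  apply (locally_open (fun s => T0 < s < T1)).
  - apply open_and. apply open_gt. apply open_lt.
  - intros; apply HF; auto.
  - auto.
Qed.

Lemma D_opp (f : R -> R) t a : is_derive f t a -> is_derive (fun s => - f s) t (- a).
Proof. intros H. exact (is_derive_opp f t a H). Qed.

Lemma D_shape (f1 f2 f3 f4 f5 : R -> R) d1 d2 d3 d4 d5 c1 c2 t :
  is_derive f1 t d1 -> is_derive f2 t d2 -> is_derive f3 t d3 -> is_derive f4 t d4 -> is_derive f5 t d5 ->
  is_derive (fun s => - f1 s + (f2 s + f3 s) / 2 * c1 - (f4 s + f5 s) / 2 * c2) t
            (- d1 + (d2 + d3) / 2 * c1 - (d4 + d5) / 2 * c2).
Proof.
  intros. apply D_minus. apply D_plus. apply D_opp; auto.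
  apply D_mulc. unfold Rdiv. apply D_mulc. apply D_plus; auto.
  apply D_mulc. unfold Rdiv. apply D_mulc. apply D_plus; auto.
Qed.

Lemma is_derive_Bj k N xs (zc : R -> coefs) i cq j t :
  (forall c m, (c < N)%nat -> (m <= k)%nat -> is_derive (fun s => zc s i c m) t (cd zc t i c m)) ->
  (0 < N)%nat -> (j < N)%nat ->
  is_derive (fun s => Bj N xs (pw k (zc s i)) (pw k cq) j) t (Bj N xs (pw k (cd zc t i)) (pw k cq) j).
Proof.
  intros Hc HN Hj. unfold Bj, avgR, avgL.
  apply (D_shape (fun s => RInt (fun x => pw k (zc s i) j x * Derive (pw k cq j) x) (xs j) (xs (S j)))
                 (fun s => pw k (zc s i) (nextc N j) (xs (nextc N j)))
                 (fun s => pw k (zc s i) j (xs (S j)))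
                 (fun s => pw k (zc s i) j (xs j))
                 (fun s => pw k (zc s i) (prevc N j) (xs (S (prevc N j))))).
  - apply (is_derive_RInt_peval k (fun s => zc s i j) (cd zc t i j)).
    intros; apply cont_Dpeval. intros; apply Hc; auto.
  - apply (is_derive_peval_coef k (fun s => zc s i (nextc N j)) (cd zc t i (nextc N j))).
    intros; apply Hc; auto. apply next_lt; auto.
  - apply (is_derive_peval_coef k (fun s => zc s i j) (cd zc t i j)). intros; apply Hc; auto.
  - apply (is_derive_peval_coef k (fun s => zc s i j) (cd zc t i j)). intros; apply Hc; auto.
  - apply (is_derive_peval_coef k (fun s => zc s i (prevc N j)) (cd zc t i (prevc N j))).
    intros; apply Hc; auto. apply prev_lt; auto.
Qed.

Lemma is_derive_RIntpp k (zc : R -> coefs) i cq j t l r :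
  (forall m, (m <= k)%nat -> is_derive (fun s => zc s i j m) t (cd zc t i j m)) ->
  is_derive (fun s => RInt (fun x => pw k (zc s i) j x * pw k cq j x) l r) t
            (RInt (fun x => pw k (cd zc t i) j x * pw k cq j x) l r).
Proof.
  intros Hc. apply (is_derive_RInt_peval k (fun s => zc s i j) (cd zc t i j)).
  intros; apply cont_peval. auto.
Qed.

Lemma deq3 (k N : nat) (xs : nat -> R) (sigma nu : R) (V : R -> R) (zc : R -> coefs) T0 T1 t cq j :
  (forall s, T0 < s < T1 -> scheme_eq k N xs sigma nu V zc s (single 3 cq) j) -> T0 < t < T1 ->
  (forall i c m, (i < 6)%nat -> (c < N)%nat -> (m <= k)%nat -> is_derive (fun s => zc s i c m) t (cd zc t i c m)) ->
  (0 < N)%nat -> (j < N)%nat ->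
  Bj N xs (pw k (cd zc t 2%nat)) (pw k cq) j =
  RInt (fun x => pw k (cd zc t 0%nat) j x * pw k cq j x) (xs j) (xs (S j)).
Proof.
  intros HS Ht Hc HN Hj.
  apply Rminus_diag_uniq.
  apply (deriv_zero T0 T1 (fun s => Bj N xs (pw k (zc s 2%nat)) (pw k cq) j
     - RInt (fun x => pw k (zc s 0%nat) j x * pw k cq j x) (xs j) (xs (S j))) t); auto.
  - intros s Hs. apply Rminus_diag_eq. apply (clean3 k N xs sigma nu V zc). auto.
  - apply D_minus. apply (is_derive_Bj k N xs zc 2 cq j t); auto. intros; apply Hc; auto; lia.
    apply (is_derive_RIntpp k zc 0 cq j t); intros; apply Hc; auto; lia.
Qed.

Lemma deq4 (k N : nat) (xs : nat -> R) (sigma nu : R) (V : R -> R) (zc : R -> coefs) T0 T1 t cq j :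
  (forall s, T0 < s < T1 -> scheme_eq k N xs sigma nu V zc s (single 4 cq) j) -> T0 < t < T1 ->
  (forall i c m, (i < 6)%nat -> (c < N)%nat -> (m <= k)%nat -> is_derive (fun s => zc s i c m) t (cd zc t i c m)) ->
  (0 < N)%nat -> (j < N)%nat ->
  - (sigma / 2) * Bj N xs (pw k (cd zc t 0%nat)) (pw k cq) j =
  - (sigma / 2) * RInt (fun x => pw k (cd zc t 1%nat) j x * pw k cq j x) (xs j) (xs (S j)).
Proof.
  intros HS Ht Hc HN Hj.
  apply Rminus_diag_uniq.
  apply (deriv_zero T0 T1 (fun s => - (sigma / 2) * Bj N xs (pw k (zc s 0%nat)) (pw k cq) j
     - - (sigma / 2) * RInt (fun x => pw k (zc s 1%nat) j x * pw k cq j x) (xs j) (xs (S j))) t); auto.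
  - intros s Hs. apply Rminus_diag_eq. apply (clean4 k N xs sigma nu V zc). auto.
  - apply D_minus; apply D_cmul. apply (is_derive_Bj k N xs zc 0 cq j t); auto. intros; apply Hc; auto; lia.
    apply (is_derive_RIntpp k zc 1 cq j t); intros; apply Hc; auto; lia.
Qed.

Lemma deq5 (k N : nat) (xs : nat -> R) (sigma nu : R) (V : R -> R) (zc : R -> coefs) T0 T1 t cq j :
  (forall s, T0 < s < T1 -> scheme_eq k N xs sigma nu V zc s (single 5 cq) j) -> T0 < t < T1 ->
  (forall i c m, (i < 6)%nat -> (c < N)%nat -> (m <= k)%nat -> is_derive (fun s => zc s i c m) t (cd zc t i c m)) ->
  (0 < N)%nat -> (j < N)%nat ->
  - nu * Bj N xs (pw k (cd zc t 0%nat)) (pw k cq) j =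
  - nu * RInt (fun x => pw k (cd zc t 5%nat) j x * pw k cq j x) (xs j) (xs (S j)).
Proof.
  intros HS Ht Hc HN Hj.
  apply Rminus_diag_uniq.
  apply (deriv_zero T0 T1 (fun s => - nu * Bj N xs (pw k (zc s 0%nat)) (pw k cq) j
     - - nu * RInt (fun x => pw k (zc s 5%nat) j x * pw k cq j x) (xs j) (xs (S j))) t); auto.
  - intros s Hs. apply Rminus_diag_eq. apply (clean5 k N xs sigma nu V zc). auto.
  - apply D_minus; apply D_cmul. apply (is_derive_Bj k N xs zc 0 cq j t); auto. intros; apply Hc; auto; lia.
    apply (is_derive_RIntpp k zc 5 cq j t); intros; apply Hc; auto; lia.
Qed.

Lemma sum_comb3 (A B C T : nat -> R) al be n :
  (forall j, (j <= n)%nat -> T j = al * A j + be * B j - C j) ->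
  sum_f_R0 T n = al * sum_f_R0 A n + be * sum_f_R0 B n - sum_f_R0 C n.
Proof.
  induction n; intros H; cbn [sum_f_R0].
  - apply H; lia.
  - rewrite IHn by (intros; apply H; lia). rewrite (H (S n)) by lia. ring.
Qed.

Lemma rate_zero (sigma nu : R) (V : R -> R) (k N : nat) (xs : nat -> R)
  (T0 T1 : R) (zc : R -> coefs) t :
  (forall y, ex_derive V y) -> (forall y, continuous (Derive V) y) ->
  (0 < N)%nat ->
  (forall i c m, (i < 6)%nat -> (c < N)%nat -> (m <= k)%nat -> forall s, T0 < s < T1 ->
      is_derive (fun s => zc s i c m) s (cd zc s i c m)) ->
  (forall s, T0 < s < T1 -> forall j, (j < N)%nat -> forall phi : coefs,
       scheme_eq k N xs sigma nu V zc s phi j) ->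
  T0 < t < T1 ->
  sum_f_R0 (fun j => RInt (fun x => - Derive V (pw k (zc t 0%nat) j x) * pw k (cd zc t 0%nat) j x
                               + nu * (pw k (zc t 5%nat) j x * pw k (cd zc t 5%nat) j x))
                          (xs j) (xs (S j))) (N - 1) = 0.
Proof.
  intros HV HV' HN Hc HS Ht.
  rewrite (sum_comb3
    (fun j => Bj N xs (pw k (zc t 4%nat)) (pw k (cd zc t 0%nat)) j + Bj N xs (pw k (cd zc t 0%nat)) (pw k (zc t 4%nat)) j)
    (fun j => Bj N xs (pw k (zc t 5%nat)) (pw k (cd zc t 0%nat)) j + Bj N xs (pw k (cd zc t 0%nat)) (pw k (zc t 5%nat)) j)
    (fun j => Bj N xs (pw k (zc t 3%nat)) (pw k (cd zc t 2%nat)) j + Bj N xs (pw k (cd zc t 2%nat)) (pw k (zc t 3%nat)) j)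
    _ (sigma/2) nu).
  - rewrite !antisym by auto. ring.
  - intros j Hj. assert (Hj' : (j < N)%nat) by lia.
    assert (Hd : forall i m, (i < 6)%nat -> (m <= k)%nat -> ex_derive (fun s => zc s i j m) t).
    { intros. eexists. apply Hc; auto. }
    assert (Hc' : forall i c m, (i < 6)%nat -> (c < N)%nat -> (m <= k)%nat ->
       is_derive (fun s => zc s i c m) t (cd zc t i c m)) by (intros; apply Hc; auto).
    pose proof (clean0 k N xs sigma nu V zc t (cd zc t 0%nat) j HV HV' Hd (HS t Ht j Hj' _)) as E0.
    pose proof (clean1 k N xs sigma nu V zc t (cd zc t 1%nat) j (fun m Hm => Hd 0%nat m ltac:(lia) Hm) (HS t Ht j Hj' _)) as E1.
    pose proof (clean2 k N xs sigma nu V zc t (cd zc t 2%nat) j (fun m Hm => Hd 0%nat m ltac:(lia) Hm) (HS t Ht j Hj' _)) as E2.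
    pose proof (deq3 k N xs sigma nu V zc T0 T1 t (zc t 3%nat) j (fun s Hs => HS s Hs j Hj' _) Ht Hc' HN Hj') as E3.
    pose proof (deq4 k N xs sigma nu V zc T0 T1 t (zc t 4%nat) j (fun s Hs => HS s Hs j Hj' _) Ht Hc' HN Hj') as E4.
    pose proof (deq5 k N xs sigma nu V zc T0 T1 t (zc t 5%nat) j (fun s Hs => HS s Hs j Hj' _) Ht Hc' HN Hj') as E5.
    assert (XV : ex_RInt (fun x => Derive V (pw k (zc t 0%nat) j x) * pw k (cd zc t 0%nat) j x) (xs j) (xs (S j))).
    { apply exR; intros. apply c_mult. apply (continuous_comp (fun y => pw k (zc t 0%nat) j y) (Derive V)).
       apply cont_peval. apply HV'. apply cont_peval. }
    rewrite (RInt_extR _ (fun x => -1 * (Derive V (pw k (zc t 0%nat) j x) * pw k (cd zc t 0%nat) j x)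
                               + nu * (pw k (zc t 5%nat) j x * pw k (cd zc t 5%nat) j x)))
      by (intros; ring).
    rewrite (RInt_lin2 (fun x => Derive V (pw k (zc t 0%nat) j x) * pw k (cd zc t 0%nat) j x)
                       (fun x => pw k (zc t 5%nat) j x * pw k (cd zc t 5%nat) j x) _ _ (-1) nu XV ltac:(apply exRpp)).
    rewrite (RInt_comm (pw k (cd zc t 1%nat) j) (pw k (cd zc t 0%nat) j)) in E0.
    rewrite (RInt_comm (pw k (cd zc t 2%nat) j) (pw k (cd zc t 0%nat) j)) in E0.
    rewrite (RInt_comm (pw k (zc t 3%nat) j) (pw k (cd zc t 0%nat) j)) in E0.
    rewrite (RInt_comm (pw k (zc t 4%nat) j) (pw k (cd zc t 1%nat) j)) in E1.
    rewrite (RInt_comm (pw k (zc t 5%nat) j) (pw k (cd zc t 5%nat) j)).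
    lra.
Qed.

Lemma D_eqv (f : R -> R) t a b : is_derive f t a -> a = b -> is_derive f t b.
Proof. intros H ->; exact H. Qed.

Lemma cpt_of_cont (f : R -> R) x : continuous f x -> continuity_pt f x.
Proof. intros H. apply continuity_pt_filterlim. exact H. Qed.

Lemma cont2_peval k (C : R -> nat -> R) t x :
  (forall m, (m <= k)%nat -> continuity_pt (fun u => C u m) t) ->
  continuity_2d_pt (fun u v => peval k (C u) v) t x.
Proof.
  intros H. unfold peval. induction k; cbn [sum_f_R0].
  - apply (continuity_2d_pt_mult (fun u v => C u 0%nat) (fun u v => v ^ 0)).
    apply (continuity_1d_2d_pt_comp (fun u => C u 0%nat) (fun u v => u)). apply H; lia.
    apply continuity_2d_pt_id1.
    apply (continuity_1d_2d_pt_comp (fun v => v ^ 0) (fun u v => v)).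
    apply cpt_of_cont, exd_cont. auto_derive; auto. apply continuity_2d_pt_id2.
  - apply (continuity_2d_pt_plus (fun u v => sum_f_R0 (fun m => C u m * v ^ m) k)
            (fun u v => C u (S k) * v ^ (S k))).
    apply IHk; intros; apply H; lia.
    apply (continuity_2d_pt_mult (fun u v => C u (S k)) (fun u v => v ^ (S k))).
    apply (continuity_1d_2d_pt_comp (fun u => C u (S k)) (fun u v => u)). apply H; lia.
    apply continuity_2d_pt_id1.
    apply (continuity_1d_2d_pt_comp (fun v => v ^ (S k)) (fun u v => v)).
    apply cpt_of_cont, exd_cont. auto_derive; auto. apply continuity_2d_pt_id2.
Qed.

Definition fE k nu V (zc : R -> coefs) j (u x : R) : R :=
  - V (peval k (zc u 0%nat j) x) + nu / 2 * peval k (zc u 5%nat j) x ^ 2.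
Definition GE k nu V (zc : R -> coefs) j (u x : R) : R :=
  - Derive V (peval k (zc u 0%nat j) x) * peval k (cd zc u 0%nat j) x
  + nu * (peval k (zc u 5%nat j) x * peval k (cd zc u 5%nat j) x).

Lemma GE_der k nu V (zc : R -> coefs) j s x :
  (forall y, ex_derive V y) ->
  (forall i m, (i < 6)%nat -> (m <= k)%nat -> ex_derive (fun u => zc u i j m) s) ->
  is_derive (fun u => fE k nu V zc j u x) s (GE k nu V zc j s x).
Proof.
  intros HV Hd. unfold fE, GE.
  assert (P0 : is_derive (fun u => peval k (zc u 0%nat j) x) s (peval k (cd zc s 0%nat j) x)).
  { apply (is_derive_peval_coef k (fun u => zc u 0%nat j)). intros; apply Derive_correct, Hd; auto; lia. }
  assert (P5 : is_derive (fun u => peval k (zc u 5%nat j) x) s (peval k (cd zc s 5%nat j) x)).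
  { apply (is_derive_peval_coef k (fun u => zc u 5%nat j)). intros; apply Derive_correct, Hd; auto; lia. }
  apply D_plus.
  - eapply D_eqv. apply D_opp.
    apply (is_derive_comp V (fun u => peval k (zc u 0%nat j) x)). apply Derive_correct, HV. exact P0.
    unfold scal; simpl; unfold mult; simpl. ring.
  - eapply D_eqv. apply D_cmul. apply (is_derive_pow _ 2 _ _ P5).
    simpl. field.
Qed.

Lemma cell_deriv (sigma nu : R) (V : R -> R) (k : nat) (T0 T1 : R) (zc : R -> coefs) j a b t :
  (forall y, ex_derive V y) -> (forall y, continuous (Derive V) y) ->
  (forall i m, (i < 6)%nat -> (m <= k)%nat -> forall s, T0 < s < T1 ->
      ex_derive (fun u => zc u i j m) s /\ continuous (Derive (fun u => zc u i j m)) s) ->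
  T0 < t < T1 ->
  is_derive (fun s => RInt (fun x => fE k nu V zc j s x) a b) t
            (RInt (fun x => GE k nu V zc j t x) a b).
Proof.
  intros HV HV' Hz Ht.
  replace (RInt (fun x => GE k nu V zc j t x) a b)
    with (RInt (fun x => Derive (fun u => fE k nu V zc j u x) t) a b).
  2: { apply RInt_extR. intros x. apply is_derive_unique. apply GE_der; auto.
       intros; apply Hz; auto. }
  apply (is_derive_RInt_param (fun s x => fE k nu V zc j s x)).
  - apply (locally_open (fun s => T0 < s < T1)).
    + apply open_and. apply open_gt. apply open_lt.
    + intros s Hs x _. eexists. apply GE_der; auto. intros; apply Hz; auto.
    + auto.
  - intros x _.
    apply (continuity_2d_pt_ext_loc (fun u v => GE k nu V zc j u v)).
    + assert (Hd : 0 < Rmin (t - T0) (T1 - t)) by (apply Rmin_pos; lra).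
      exists (mkposreal _ Hd). intros u v Hu _. simpl in Hu.
      symmetry. apply is_derive_unique. apply GE_der; auto.
      intros; apply Hz; auto.
      apply Rabs_lt_between in Hu. assert (H1 := Rmin_l (t - T0) (T1 - t)).
      assert (H2 := Rmin_r (t - T0) (T1 - t)). lra.
    + unfold GE.
      assert (C0 : continuity_2d_pt (fun u v => peval k (zc u 0%nat j) v) t x).
      { apply cont2_peval. intros. apply cpt_of_cont, exd_cont. apply Hz; auto; lia. }
      assert (C5 : continuity_2d_pt (fun u v => peval k (zc u 5%nat j) v) t x).
      { apply cont2_peval. intros. apply cpt_of_cont, exd_cont. apply Hz; auto; lia. }
      assert (D0 : continuity_2d_pt (fun u v => peval k (cd zc u 0%nat j) v) t x).
      { apply (cont2_peval k (fun u => cd zc u 0%nat j)). intros. apply cpt_of_cont. apply Hz; auto; lia. }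
      assert (D5 : continuity_2d_pt (fun u v => peval k (cd zc u 5%nat j) v) t x).
      { apply (cont2_peval k (fun u => cd zc u 5%nat j)). intros. apply cpt_of_cont. apply Hz; auto; lia. }
      apply (continuity_2d_pt_plus
        (fun u v => - Derive V (peval k (zc u 0%nat j) v) * peval k (cd zc u 0%nat j) v)
        (fun u v => nu * (peval k (zc u 5%nat j) v * peval k (cd zc u 5%nat j) v))).
      * apply (continuity_2d_pt_mult (fun u v => - Derive V (peval k (zc u 0%nat j) v))
                                     (fun u v => peval k (cd zc u 0%nat j) v)); auto.
        apply (continuity_2d_pt_opp (fun u v => Derive V (peval k (zc u 0%nat j) v))).
        apply (continuity_1d_2d_pt_comp (Derive V) (fun u v => peval k (zc u 0%nat j) v)); auto.
        apply cpt_of_cont; auto.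
      * apply (continuity_2d_pt_mult (fun u v => nu) (fun u v => peval k (zc u 5%nat j) v * peval k (cd zc u 5%nat j) v)).
        apply continuity_2d_pt_const.
        apply (continuity_2d_pt_mult (fun u v => peval k (zc u 5%nat j) v) (fun u v => peval k (cd zc u 5%nat j) v)); auto.
  - apply filter_forall. intros s. apply exR. intros x. unfold fE.
    apply c_plus. apply c_opp. apply (continuous_comp (fun y => peval k (zc s 0%nat j) y) V).
    apply cont_peval. apply exd_cont; auto.
    apply c_mult. apply c_const. apply c_pow2. apply cont_peval.
Qed.

Theorem proposition4p6
  (sigma nu : R) (V : R -> R) (k N : nat) (xs : nat -> R)
  (T0 T1 : R) (zc : R -> coefs) :
  (forall n x, ex_derive_n V n x) ->
  (0 < N)%nat ->
  (forall j, (j < N)%nat -> xs j < xs (S j)) ->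
  (* z_h is C^1 in t on (T0, T1) with values in (V_h)^6 *)
  (forall i j m, (i < 6)%nat -> (j < N)%nat -> (m <= k)%nat ->
     forall t, T0 < t < T1 ->
       ex_derive (fun s => zc s i j m) t /\
       continuous (Derive (fun s => zc s i j m)) t) ->
  (* the DG scheme holds for every cell and every test function *)
  (forall t, T0 < t < T1 ->
     forall j, (j < N)%nat -> forall phi : coefs,
       scheme_eq k N xs sigma nu V zc t phi j) ->
  forall t1 t2, T0 < t1 < T1 -> T0 < t2 < T1 ->
    energy k N xs nu V zc t1 = energy k N xs nu V zc t2.
Proof.
  intros HVn HN Hxs Hz HS t1 t2 Ht1 Ht2.
  assert (HV : forall y, ex_derive V y) by (intros y; exact (HVn 1%nat y)).
  assert (HV' : forall y, continuous (Derive V) y) by (intros y; apply exd_cont; exact (HVn 2%nat y)).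
  assert (HD : forall t, T0 < t < T1 -> is_derive (fun s => energy k N xs nu V zc s) t 0).
  { intros t Ht. unfold energy.
    eapply D_eqv.
    - apply (is_derive_sumf (fun s j => RInt (fun x => fE k nu V zc j s x) (xs j) (xs (S j)))).
      intros j Hj. apply (cell_deriv sigma nu V k T0 T1 zc j); auto.
      intros; apply Hz; auto; lia.
    - etransitivity; [| apply (rate_zero sigma nu V k N xs T0 T1 zc t); auto].
      + apply sum_eq; intros; apply RInt_extR; intros; reflexivity.
      + intros i c m Hi Hc Hm s Hs. apply Derive_correct. apply Hz; auto. }
  destruct (Rtotal_order t1 t2) as [H|[H|H]].
  - apply (eq_is_derive (fun s => energy k N xs nu V zc s)); auto.
    intros t Ht. apply HD. lra.
  - subst; reflexivity.
  - symmetry. apply (eq_is_derive (fun s => energy k N xs nu V zc s)); auto.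
    intros t Ht. apply HD. lra.
Qed.
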